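(* Let $(f,I,U)$ be a safety verification problem that is robustly safe with robustness margin $\mu>0$, with $\overline{I}\cap\overline{U}=\emptyset$ and $\mathbb{R}^n\setminus U$ bounded, and let $V$ be a $\mu$-robust safety certificate of $(f,I,U)$. Define $\nu: R^{\mathbb{R}}_f(\partial\overline{V})\to\mathbb{R}$ by $\nu(x):=-t$, where $t$ is the unique $t\in\mathbb{R}$ with $\varphi_f(x,t)\in\partial\overline{V}$. Then there is an open neighborhood of $\partial\overline{V}$, contained in the domain of $\nu$, on which $\nu$ is continuous.
   Context: A safety verification problem is a triple $(f,I,U)$ with $f:\mathbb{R}^n\to\mathbb{R}^n$ smooth, $I,U\subseteq\mathbb{R}^n$. Convention: the flow $\varphi_f(x,t)$ of $\dot x=f(x)$ (the state reached at time $t\in\mathbb{R}$ from $x$; negative $t$ allowed) is defined for all $x$, $t$. For $X\subseteq\mathbb{R}^n$, $R^{\mathbb{R}}_f(X)=\{\varphi_f(x,t)\mid x\in X,\ t\in\mathbb{R}\}$. $\partial\overline{V}$ denotes the boundary of the closure of $V$. Under the hypotheses, for every $x\in R^{\mathbb{R}}_f(\partial\overline{V})$ there is exactly one $t\in\mathbb{R}$ with $\varphi_f(x,t)\in\partial\overline{V}$, so $\nu$ is well defined. For $\varepsilon\ge 0$, an $\varepsilon$-solution of $\dot x=f(x)$ is a differentiable function $x:\mathbb{R}^{\ge0}\to\mathbb{R}^n$ with $\|f(x(t))-\dot x(t)\|\le\varepsilon$ for all $t\ge0$. For $X\subseteq\mathbb{R}^n$, $T\subseteq\mathbb{R}^{\ge0}$: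 $R^{T}_{f,\varepsilon}(X)=\{x(t)\mid t\in T,\ x\text{ an }\varepsilon\text{-solution with }x(0)\in X\}$, $R_{f,\varepsilon}(X)=R^{\mathbb{R}^{\ge0}}_{f,\varepsilon}(X)$. Robustly safe with robustness margin $\mu>0$ means $R_{f,\mu}(I)\cap U=\emptyset$. A $\mu$-robust safety certificate is a set $V$ with $I\subseteq V$, $R_{f,\mu}(V)\subseteq V$, $V\cap U=\emptyset$. *)

(* Defs.v *)
From Stdlib Require Import Reals.
From mathcomp Require Import ssreflect ssrfun ssrbool eqtype ssrnat fintype bigop.

Set Implicit Arguments.
Unset Strict Implicit.

Open Scope R_scope.

Definition vec (n : nat) : Type := 'I_n -> R.

Definition vadd {n} (x y : vec n) : vec n := fun i => x i + y i.
Definition vsub {n} (x y : vec n) : vec n := fun i => x i - y i.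
Definition vscal {n} (a : R) (x : vec n) : vec n := fun i => a * x i.
Definition ebasis {n} (i : 'I_n) : vec n := fun j => if j == i then 1 else 0.

Definition vnorm {n} (x : vec n) : R :=
  sqrt (\big[Rplus/0]_(i < n) (x i * x i)).

Definition set_ (n : nat) := vec n -> Prop.

Definition is_open {n} (S : set_ n) : Prop :=
  forall x, S x -> exists r, 0 < r /\ forall y, vnorm (vsub y x) < r -> S y.

Definition sclosure {n} (S : set_ n) : set_ n :=
  fun x => forall r, 0 < r -> exists y, S y /\ vnorm (vsub y x) < r.

Definition setC_ {n} (S : set_ n) : set_ n := fun x => ~ S x.

Definition sboundary {n} (S : set_ n) : set_ n :=
  fun x => sclosure S x /\ sclosure (setC_ S) x.

Definition sbounded {n} (S : set_ n) : Prop :=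
  exists M, forall x, S x -> vnorm x <= M.

Definition sdisjoint {n} (A B : set_ n) : Prop := forall x, A x -> B x -> False.

Definition ssubset {n} (A B : set_ n) : Prop := forall x, A x -> B x.

(** Smoothness of f : R^n -> R^n.  [Ck k g] : the scalar function g is
    continuous and has partial derivatives (everywhere) of all orders <= k,
    all of them continuous. *)
Definition cont_fun {n} (g : vec n -> R) : Prop :=
  forall x eps, 0 < eps -> exists delta, 0 < delta /\
    forall y, vnorm (vsub y x) < delta -> Rabs (g y - g x) < eps.

Fixpoint Ck {n} (k : nat) (g : vec n -> R) : Prop :=
  match k with
  | O => cont_fun g
  | S k' => cont_fun g /\
      forall i : 'I_n, exists dg : vec n -> R,
        (forall x, derivable_pt_lim (fun s => g (vadd x (vscal s (ebasis i)))) 0 (dg x))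
        /\ Ck k' dg
  end.

Definition smooth {n} (f : vec n -> vec n) : Prop :=
  forall (j : 'I_n) (k : nat), Ck k (fun x => f x j).

Definition is_flow {n} (f : vec n -> vec n) (phi : vec n -> R -> vec n) : Prop :=
  forall x, phi x 0 = x /\
    forall (t : R) (j : 'I_n), derivable_pt_lim (fun s => phi x s j) t (f (phi x t) j).

Definition flow_reach {n} (phi : vec n -> R -> vec n) (X : set_ n) : set_ n :=
  fun y => exists x t, X x /\ y = phi x t.

(** derivative of g : R>=0 -> R at t >= 0 (one-sided at t = 0) *)
Definition deriv_nonneg (g : R -> R) (t l : R) : Prop :=
  forall eps, 0 < eps -> exists delta, 0 < delta /\
    forall h, h <> 0 -> 0 <= t + h -> Rabs h < delta ->
      Rabs ((g (t + h) - g t) / h - l) < eps.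

(** eps-solution of x' = f(x): a differentiable x : R>=0 -> R^n (values at
    negative times are irrelevant) with ||f(x(t)) - x'(t)|| <= eps, t >= 0. *)
Definition eps_solution {n} (f : vec n -> vec n) (eps : R) (x : R -> vec n) : Prop :=
  forall t, 0 <= t -> exists v : vec n,
    (forall j, deriv_nonneg (fun s => x s j) t (v j)) /\
    vnorm (vsub (f (x t)) v) <= eps.

Definition eps_reach {n} (f : vec n -> vec n) (eps : R) (X : set_ n) : set_ n :=
  fun y => exists (x : R -> vec n) (t : R),
    eps_solution f eps x /\ X (x 0) /\ 0 <= t /\ y = x t.

Definition robustly_safe {n} (f : vec n -> vec n) (I U : set_ n) (mu : R) : Prop :=
  0 < mu /\ sdisjoint (eps_reach f mu I) U.

Definition robust_certificate {n} (f : vec n -> vec n) (I U : set_ n) (mu : R)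
  (V : set_ n) : Prop :=
  ssubset I V /\ ssubset (eps_reach f mu V) V /\ sdisjoint V U.

Definition cont_on {n} (W : set_ n) (nu : vec n -> R) : Prop :=
  forall x, W x -> forall eps, 0 < eps -> exists delta, 0 < delta /\
    forall y, W y -> vnorm (vsub y x) < delta -> Rabs (nu y - nu x) < eps.

(* Main.v *)
Require Import Defs.
From Stdlib Require Import Reals Lra FunctionalExtensionality ClassicalEpsilon Classical.
From HB Require Import structures.
From mathcomp Require Import ssreflect ssrbool eqtype ssrnat fintype bigop seq.
Open Scope R_scope.
Set Implicit Arguments.
Unset Strict Implicit.

HB.instance Definition _ := Monoid.isComLaw.Build R 0 Rplus (fun a b c => Logic.eq_sym (Rplus_assoc a b c)) Rplus_comm Rplus_0_l.

Lemma sum_nonneg n (F : 'I_n -> R) : (forall i, 0 <= F i) -> 0 <= \big[Rplus/0]_(i < n) F i.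
Proof. move=> H; apply: (big_ind (fun x => 0 <= x)) => //; [lra| move=> x y; lra]. Qed.

Lemma sum_le_n n (F : 'I_n -> R) c : (forall i, F i <= c) -> \big[Rplus/0]_(i < n) F i <= INR n * c.
Proof.
elim: n F => [|n IH] F H; first by rewrite big_ord0 /=; lra.
rewrite big_ord_recr S_INR; rewrite /Monoid.Law.sort /=.
have /= := IH (fun i => F (widen_ord (leqnSn n) i)) (fun i => H _). have := H ord_max. nra.
Qed.

Lemma term_le_sum n (F : 'I_n -> R) i : (forall i, 0 <= F i) -> F i <= \big[Rplus/0]_(j < n) F j.
Proof.
move=> H; rewrite (bigD1 i) //=.
have : 0 <= \big[Rplus/0]_(j < n | j != i) F j.
  apply: (big_ind (fun x => 0 <= x)) => //; [lra| move=> x y; lra].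
move=> h; rewrite -{1}(Rplus_0_r (F i)); apply: Rplus_le_compat_l; exact: h.
Qed.

Definition Kn (n : nat) : R := INR n + 1.
Lemma Kn_pos n : 0 < Kn n.
Proof. rewrite /Kn; have := pos_INR n; lra. Qed.
Lemma Kn_ge1 n : 1 <= Kn n.
Proof. rewrite /Kn; have := pos_INR n; lra. Qed.

Lemma comp_le_vnorm n (x : vec n) i : Rabs (x i) <= vnorm x.
Proof.
rewrite /vnorm -sqrt_Rsqr_abs /Rsqr; apply: sqrt_le_1_alt.
have h := @term_le_sum n (fun j => x j * x j) i; simpl in h; apply: h => j; nra.
Qed.

Lemma vnorm_le n (x : vec n) c : 0 <= c -> (forall i, Rabs (x i) <= c) -> vnorm x <= Kn n * c.
Proof.
move=> c0 H; rewrite /vnorm.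
have hK := Kn_pos n.
rewrite -(sqrt_Rsqr (Kn n * c)); last by nra.
apply: sqrt_le_1_alt.
have hs := @sum_le_n n (fun j => x j * x j) (c * c); simpl in hs.
apply: Rle_trans; first apply: hs.
  move=> j; have := H j; have := Rabs_pos (x j); move=> h1 h2.
  have h3 : Rabs (x j * x j) <= c * c by rewrite Rabs_mult; nra.
  apply: Rle_trans; [apply: Rle_abs| exact h3].
rewrite /Rsqr /Kn; have := pos_INR n; nra.
Qed.

Lemma vnorm_ge0 n (x : vec n) : 0 <= vnorm x.
Proof. apply: sqrt_pos. Qed.

Definition box {n} (x p : vec n) (r : R) : Prop := forall i, Rabs (x i - p i) <= r.

Lemma vnorm_box n (x p : vec n) r : vnorm (vsub x p) < r -> forall i, Rabs (x i - p i) < r.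
Proof. move=> h i; change (x i - p i) with (vsub x p i); have := comp_le_vnorm (vsub x p) i; lra. Qed.

Lemma box_vnorm n (x p : vec n) c : 0 <= c -> (forall i, Rabs (x i - p i) <= c) -> vnorm (vsub x p) <= Kn n * c.
Proof. move=> c0 h; apply: vnorm_le => // i; exact: h. Qed.

Lemma vnorm_self n (x : vec n) : vnorm (vsub x x) = 0.
Proof.
apply: Rle_antisym; last exact: vnorm_ge0.
have := box_vnorm (p:=x) (x:=x) (c:=0) (Rle_refl 0).
rewrite Rmult_0_r; apply=> i; rewrite Rminus_diag Rabs_R0; lra.
Qed.

Lemma fin_all n (P : 'I_n -> R -> Prop) :
  (forall j d d', P j d -> 0 < d' <= d -> P j d') ->
  (forall j, exists d, 0 < d /\ P j d) -> exists d, 0 < d /\ forall j, P j d.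
Proof.
move=> H1 H2.
have: forall l : seq 'I_n, exists d, 0 < d /\ forall j, j \in l -> P j d.
  elim => [|a l [d [d0 Hd]]]; first by exists 1; split; [lra| ].
  have [da [da0 Ha]] := H2 a.
  have hm : 0 < Rmin d da by apply: Rmin_pos.
  exists (Rmin d da); split => // j; rewrite in_cons => /orP [/eqP -> | jl].
    apply: H1 Ha _; split => //; apply: Rmin_r.
  apply: H1 (Hd _ jl) _; split => //; apply: Rmin_l.
move=> /(_ (enum 'I_n)) [d [d0 Hd]]; exists d; split => // j; apply: Hd; by rewrite mem_enum.
Qed.

Definition sol {n} (F : vec n -> vec n) (u : R -> vec n) : Prop :=
  forall t j, derivable_pt_lim (fun s => u s j) t (F (u t) j).

Lemma dlim_cont (g : R -> R) t l : derivable_pt_lim g t l ->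
  forall e, 0 < e -> exists d, 0 < d /\ forall t', Rabs (t' - t) < d -> Rabs (g t' - g t) < e.
Proof.
move=> h e e0.
have hc : continuity_pt g t by apply: derivable_continuous_pt; exists l; exact h.
have [d [d0 Hd]] := hc e e0.
exists d; split => // t' ht'.
case: (Req_dec t' t) => [->|ne]; first by rewrite Rminus_diag Rabs_R0.
apply: (Hd t'); split; first by split => //; auto.
exact: ht'.
Qed.

Lemma sol_cont n (F : vec n -> vec n) u : sol F u -> forall t e, 0 < e ->
  exists d, 0 < d /\ forall t', Rabs (t' - t) < d -> forall j, Rabs (u t' j - u t j) < e.
Proof.
move=> hs t e e0.
have [d [d0 Hd]] : exists d, 0 < d /\ forall j t', Rabs (t' - t) < d -> Rabs (u t' j - u t j) < e.
  apply: (fin_all (P := fun j d => forall t', Rabs (t' - t) < d -> Rabs (u t' j - u t j) < e)).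
  - move=> j d d' h [_ h'] t' ht; apply: h; lra.
  - move=> j; exact: (dlim_cont (hs t j) e0).
exists d; split => // t' ht j; exact: Hd.
Qed.

Lemma mvt_bound (g g' : R -> R) a b M : a <= b ->
  (forall s, a <= s <= b -> derivable_pt_lim g s (g' s)) ->
  (forall s, a < s < b -> Rabs (g' s) <= M) -> Rabs (g b - g a) <= M * (b - a).
Proof.
move=> ab hd hM.
case: (Req_dec a b) => [<-|ne].
  rewrite !Rminus_diag Rabs_R0; lra.
have ab' : a < b by lra.
have [c [hc1 hc2]] := MVT_cor2 g g' a b ab' hd.
rewrite hc1 Rabs_mult (Rabs_right (b - a)); last by lra.
apply: Rmult_le_compat_r; [lra| exact: hM].
Qed.

Lemma cont_ind (a b : R) (P : R -> Prop) : a <= b -> P a ->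
  (forall s, a <= s <= b -> (forall t, a <= t < s -> P t) ->
     exists d, 0 < d /\ forall t, s <= t < s + d -> P t) ->
  forall t, a <= t <= b -> P t.
Proof.
move=> ab Pa step.
pose E x := a <= x <= b /\ forall t, a <= t <= x -> P t.
have bE : bound E by exists b => x [[_ ?] _].
have eE : exists x, E x.
  exists a; split; [lra| move=> t ht; have -> : t = a by lra]; exact Pa.
have [s [ub lub]] := completeness E bE eE.
have as_ : a <= s by apply: ub; split; [lra| move=> t ht; have -> : t = a by lra]; exact Pa.
have sb : s <= b by apply: lub => x [[_ ?] _].
have Hlt : forall t, a <= t < s -> P t.
  move=> t [ht1 ht2].
  apply: NNPP => nP.
  have : s <= t.
    apply: lub => x Ex; apply: Rnot_lt_le => xt.
    apply: nP; apply: (proj2 Ex); split; lra.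
  lra.
have [d [d0 Hd]] := step s (conj as_ sb) Hlt.
have Ex : E (Rmin b (s + d / 2)).
  split; first by split; [apply: Rmin_glb; lra | apply: Rmin_l].
  move=> t [ht1 ht2].
  case: (Rlt_le_dec t s) => ts; first by apply: Hlt; lra.
  apply: Hd; split => //; have := Rmin_r b (s + d / 2); lra.
have := ub _ Ex.
move: Ex; rewrite /Rmin; case: (Rle_dec b (s + d / 2)) => hb [_ HE] hle; last by lra.
move=> t ht; apply: HE; lra.
Qed.

Lemma pow2_ge k : 1 <= 2 ^ k /\ INR k <= 2 ^ k.
Proof.
elim: k => [|k [IH1 IH2]]; first by simpl; lra.
rewrite S_INR; change (2 ^ k.+1) with (2 * 2 ^ k); lra.
Qed.

Lemma lim_half x a b : 0 <= b -> (forall k, x <= a + b / 2 ^ k) -> x <= a.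
Proof.
move=> b0 H; apply: Rnot_lt_le => xa.
have [N HN] := INR_archimed (x - a) b ltac:(lra).
have [h1 h2] := pow2_ge N.
have := H N.
have : b / 2 ^ N <= b / 1 by apply: Rmult_le_compat_l => //; apply: Rinv_le_contravar; lra.
have : b / 2 ^ N * 2 ^ N = b by field; lra.
nra.
Qed.

Lemma dlim_nonneg (g : R -> R) t l : derivable_pt_lim g t l -> deriv_nonneg g t l.
Proof.
move=> h e e0; have [d hd] := h e e0.
exists d; split; first exact: (cond_pos d).
move=> hh hne _ hlt; exact: hd.
Qed.

Definition lipb {n} (F : vec n -> vec n) p r L : Prop :=
  forall a b c, box a p r -> box b p r -> (forall i, Rabs (a i - b i) <= c) ->
    forall j, Rabs (F a j - F b j) <= L * c.

Lemma loc_cmp n (F : vec n -> vec n) (u w : R -> vec n) p r L t1 s d0 :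
  sol F u -> sol F w -> 0 <= L -> t1 <= s -> L * (s - t1) <= 1/2 -> 0 < r -> 0 <= d0 ->
  lipb F p r L ->
  (forall t, t1 <= t < s -> box (u t) p r /\ box (w t) p r) ->
  (forall j, Rabs (w t1 j - u t1 j) <= d0) ->
  forall t, t1 <= t <= s -> forall j, Rabs (w t j - u t j) <= 2 * d0.
Proof.
move=> su sw L0 ts hL r0 d00 hlip hbox h0.
have step : forall c, 0 <= c -> (forall t, t1 <= t < s -> forall i, Rabs (w t i - u t i) <= c) ->
    forall t, t1 <= t <= s -> forall j, Rabs (w t j - u t j) <= d0 + c / 2.
  move=> c c0 hc t ht j.
  have hm := @mvt_bound (fun τ => w τ j - u τ j) (fun τ => F (w τ) j - F (u τ) j) t1 t (L * c) (proj1 ht).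
  have : Rabs (w t j - u t j - (w t1 j - u t1 j)) <= L * c * (t - t1).
    apply: hm.
      move=> τ _; apply: derivable_pt_lim_minus; [exact: sw | exact: su].
    move=> τ hτ; have [b1 b2] := hbox τ ltac:(lra).
    apply: hlip => //; exact: (hc τ ltac:(lra)).
  have := h0 j.
  have : L * c * (t - t1) <= c / 2.
    have : L * (t - t1) <= 1/2 by nra.
    nra.
  move=> h1 h2 h3.
  have := Rabs_triang_inv (w t j - u t j) (w t1 j - u t1 j).
  lra.
have iter : forall k, forall t, t1 <= t < s -> forall i, Rabs (w t i - u t i) <= 2 * d0 + 2 * r / 2 ^ k.
  elim => [|k IH] t ht i.
    have [b1 b2] := hbox t ht.
    have := b1 i; have := b2 i.
    have := Rabs_triang (w t i - p i) (p i - u t i).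
    rewrite (Rabs_minus_sym (p i)) /= Rdiv_1_r.
    have -> : w t i - p i + (p i - u t i) = w t i - u t i by ring.
    lra.
  have [h1 h2] := pow2_ge k.
  have hq : 0 <= 2 * r / 2 ^ k by apply: Rle_mult_inv_pos; lra.
  have hc0 : 0 <= 2 * d0 + 2 * r / 2 ^ k by lra.
  have := step _ hc0 IH t ltac:(lra) i.
  have -> : 2 * d0 + 2 * r / 2 ^ k.+1 = d0 + (2 * d0 + 2 * r / 2 ^ k) / 2 by rewrite /=; field; lra.
  done.
move=> t ht j.
apply: (@lim_half _ _ r); first lra.
move=> k; have [h1 h2] := pow2_ge k.
have hq : 0 <= 2 * r / 2 ^ k by apply: Rle_mult_inv_pos; lra.
have hc0 : 0 <= 2 * d0 + 2 * r / 2 ^ k by lra.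
have := step _ hc0 (iter k) t ht j.
have -> : d0 + (2 * d0 + 2 * r / 2 ^ k) / 2 = 2 * d0 + r / 2 ^ k by field; lra.
done.
Qed.

Definition LL {n} (F : vec n -> vec n) : Prop :=
  forall p, exists r L, 0 < r /\ 0 <= L /\ lipb F p r L.

Lemma cd_gen n (F : vec n -> vec n) (u : R -> vec n) : LL F -> sol F u ->
  forall T, 0 <= T -> forall e, 0 < e -> exists d, 0 < d /\
    forall w, sol F w -> (forall j, Rabs (w 0 j - u 0 j) < d) ->
      forall t, 0 <= t <= T -> forall j, Rabs (w t j - u t j) < e.
Proof.
move=> hLL su T T0.
pose P s := forall e, 0 < e -> exists d, 0 < d /\
    forall w, sol F w -> (forall j, Rabs (w 0 j - u 0 j) < d) ->
      forall t, 0 <= t <= s -> forall j, Rabs (w t j - u t j) < e.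
have P0 : P 0.
  move=> e e0; exists e; split => // w _ hw t ht j.
  have -> : t = 0 by lra.
  exact: hw.
suff step : forall s, 0 <= s <= T -> (forall t, 0 <= t < s -> P t) ->
    exists d, 0 < d /\ forall t, s <= t < s + d -> P t.
  exact: (@cont_ind 0 T P T0 P0 step T ltac:(lra)).
move=> s hs Hlt.
have [r [L [r0 [L0 hlip]]]] := hLL (u s).
have [dc [dc0 hdc]] := @sol_cont n F u su s (r / 2) ltac:(lra).
pose h := Rmin (dc / 2) (/ (2 * (L + 1))).
have hL1 : 0 < / (2 * (L + 1)) by apply: Rinv_0_lt_compat; lra.
have h0 : 0 < h by apply: Rmin_pos; lra.
have hdc2 : h <= dc / 2 by apply: Rmin_l.
have hLh : L * h <= 1 / 2.
  have : h <= / (2 * (L + 1)) by apply: Rmin_r.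
  have : / (2 * (L + 1)) * (2 * (L + 1)) = 1 by field; lra.
  nra.
pose t1 := Rmax 0 (s - h / 2).
have t1a : 0 <= t1 by apply: Rmax_l.
have t1b : s - h / 2 <= t1 by apply: Rmax_r.
have t1c : t1 <= s.
  rewrite /t1 /Rmax; case: (Rle_dec 0 (s - h / 2)) => _; lra.
have Pt1 : P t1.
  case: (Rlt_le_dec t1 s) => ht1; first by apply: Hlt; lra.
  have e1 : t1 = 0.
    move: ht1; rewrite /t1 /Rmax; case: (Rle_dec 0 (s - h / 2)) => hh; lra.
  by rewrite e1.
exists (h / 2); split; first lra.
move=> s' hs' e e0.
pose e1 := Rmin (e / 3) (r / 8).
have e10 : 0 < e1 by apply: Rmin_pos; lra.
have e1a : e1 <= e / 3 by apply: Rmin_l.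
have e1b : e1 <= r / 8 by apply: Rmin_r.
have [d1 [d10 hd1]] := Pt1 e1 e10.
exists d1; split => // w sw hw0.
have ht1 : forall j, Rabs (w t1 j - u t1 j) < e1 by apply: hd1 => //; lra.
pose Q t := forall j, Rabs (w t j - u t j) < 3 * e1.
have hQ : forall t, t1 <= t <= t1 + h -> Q t.
  apply: (@cont_ind t1 (t1 + h) Q ltac:(lra)); first by move=> j; have := ht1 j; lra.
  move=> s'' hs'' HQ.
  have hbox : forall t, t1 <= t < s'' -> box (u t) (u s) r /\ box (w t) (u s) r.
    move=> t ht.
    have hu : forall i, Rabs (u t i - u s i) < r / 2.
      apply: hdc; apply: Rabs_def1; lra.
    split=> i; first by have := hu i; lra.
    have := HQ t ht i; have := hu i.
    have := Rabs_triang (w t i - u t i) (u t i - u s i).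
    have -> : w t i - u t i + (u t i - u s i) = w t i - u s i by ring.
    lra.
  have hle := @loc_cmp n F u w (u s) r L t1 s'' e1 su sw L0 (proj1 hs'')
     ltac:(nra) r0 ltac:(lra) hlip hbox ltac:(move=> j; have := ht1 j; lra).
  have [dw [dw0 hdw]] := @sol_cont n F w sw s'' (e1 / 2) ltac:(lra).
  have [du [du0 hdu]] := @sol_cont n F u su s'' (e1 / 2) ltac:(lra).
  exists (Rmin dw du); split; first by apply: Rmin_pos.
  move=> t ht j.
  have ha : Rabs (t - s'') < dw.
    have := Rmin_l dw du; rewrite Rabs_right; lra.
  have hb : Rabs (t - s'') < du.
    have := Rmin_r dw du; rewrite Rabs_right; lra.
  have := hdw t ha j; have := hdu t hb j; have := hle s'' ltac:(lra) j.
  have := Rabs_triang (w t j - w s'' j) (w s'' j - u t j).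
  have := Rabs_triang (w s'' j - u s'' j) (u s'' j - u t j).
  rewrite (Rabs_minus_sym (u s'' j)).
  have -> : w t j - w s'' j + (w s'' j - u t j) = w t j - u t j by ring.
  have -> : w s'' j - u s'' j + (u s'' j - u t j) = w s'' j - u t j by ring.
  lra.
move=> t ht j.
case: (Rle_lt_dec t t1) => htt.
  have := hd1 w sw hw0 t ltac:(lra) j; lra.
have := hQ t ltac:(lra) j; lra.
Qed.

Lemma dl_shift (g : R -> R) t s l : derivable_pt_lim g (t + s) l ->
  derivable_pt_lim (fun t => g (t + s)) t l.
Proof.
move=> H e e0; have [d hd] := H e e0; exists d => h h0 hh.
have -> : t + h + s = t + s + h by ring.
exact: hd.
Qed.

Lemma dl_unshift (g : R -> R) s l : derivable_pt_lim (fun h => g (s + h)) 0 l ->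
  derivable_pt_lim g s l.
Proof.
move=> H e e0; have [d hd] := H e e0; exists d => h h0 hh.
have := hd h h0 hh; rewrite Rplus_0_l Rplus_0_r; done.
Qed.

Lemma dl_rev (g : R -> R) t l : derivable_pt_lim g (- t) l ->
  derivable_pt_lim (fun t => g (- t)) t (- l).
Proof.
move=> H e e0; have [d hd] := H e e0; exists d => h h0 hh.
have h0' : - h <> 0 by lra.
have hh' : Rabs (- h) < d by rewrite Rabs_Ropp.
have := hd (- h) h0' hh'.
have -> : - (t + h) = - t + - h by ring.
have -> : (g (- t + - h) - g (- t)) / h - - l = - ((g (- t + - h) - g (- t)) / - h - l) by field.
by rewrite Rabs_Ropp.
Qed.

Lemma sol_shift n (F : vec n -> vec n) u s : sol F u -> sol F (fun t => u (t + s)).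
Proof. move=> h t j; apply: (dl_shift (g := fun x => u x j)); exact: h. Qed.

Definition negF {n} (F : vec n -> vec n) : vec n -> vec n := fun x j => - F x j.

Lemma sol_rev n (F : vec n -> vec n) u : sol F u -> sol (negF F) (fun t => u (- t)).
Proof. move=> h t j; apply: (dl_rev (g := fun x => u x j)); exact: h. Qed.

Lemma LL_neg n (F : vec n -> vec n) : LL F -> LL (negF F).
Proof.
move=> h p; have [r [L [r0 [L0 hl]]]] := h p; exists r, L; split => //; split => //.
move=> a b c ha hb hc j; rewrite /negF.
have -> : - F a j - - F b j = - (F a j - F b j) by ring.
rewrite Rabs_Ropp; exact: hl.
Qed.

Lemma flow_sol n (f : vec n -> vec n) phi x : is_flow f phi -> sol f (phi x).
Proof. move=> h t j; exact: (proj2 (h x) t j). Qed.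

Lemma uniq_fwd n (F : vec n -> vec n) u w : LL F -> sol F u -> sol F w -> u 0 = w 0 ->
  forall t, 0 <= t -> u t = w t.
Proof.
move=> hL su sw e0 t t0; apply: functional_extensionality => j.
apply: cond_eq => e he.
have [d [d0 hd]] := cd_gen hL su t0 he.
rewrite Rabs_minus_sym; apply: (hd w sw) => //; last by lra.
move=> i; rewrite e0 Rminus_diag Rabs_R0; lra.
Qed.

Lemma uniq_sol n (F : vec n -> vec n) u w : LL F -> sol F u -> sol F w -> u 0 = w 0 ->
  forall t, u t = w t.
Proof.
move=> hL su sw e0 t.
case: (Rle_lt_dec 0 t) => ht; first exact: uniq_fwd.
have := @uniq_fwd n (negF F) (fun t => u (- t)) (fun t => w (- t)) (LL_neg hL)
  (sol_rev su) (sol_rev sw) ltac:(simpl; rewrite Ropp_0; exact e0) (- t) ltac:(lra).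
by rewrite Ropp_involutive.
Qed.

Lemma flow_group n (f : vec n -> vec n) phi : LL f -> is_flow f phi ->
  forall x s t, phi (phi x s) t = phi x (s + t).
Proof.
move=> hL hf x s t.
have := @uniq_sol n f (phi (phi x s)) (fun t => phi x (t + s)) hL (flow_sol _ hf)
  (sol_shift s (flow_sol x hf)).
rewrite Rplus_0_l (proj1 (hf (phi x s))) Rplus_comm; by apply.
Qed.

Lemma flow0 n (f : vec n -> vec n) phi x : is_flow f phi -> phi x 0 = x.
Proof. move=> h; exact: (proj1 (h x)). Qed.

Lemma cd_fwd n (f : vec n -> vec n) phi : LL f -> is_flow f phi ->
  forall x T e, 0 <= T -> 0 < e -> exists d, 0 < d /\ forall y,
    (forall j, Rabs (y j - x j) < d) -> forall t, 0 <= t <= T -> forall j, Rabs (phi y t j - phi x t j) < e.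
Proof.
move=> hL hf x T e T0 e0.
have [d [d0 hd]] := cd_gen hL (flow_sol x hf) T0 e0.
exists d; split => // y hy; apply: hd; first exact: flow_sol.
by move=> j; rewrite !(flow0 _ hf).
Qed.

Lemma cd_bwd n (f : vec n -> vec n) phi : LL f -> is_flow f phi ->
  forall x T e, 0 <= T -> 0 < e -> exists d, 0 < d /\ forall y,
    (forall j, Rabs (y j - x j) < d) -> forall t, 0 <= t <= T -> forall j, Rabs (phi y (- t) j - phi x (- t) j) < e.
Proof.
move=> hL hf x T e T0 e0.
have [d [d0 hd]] := cd_gen (LL_neg hL) (sol_rev (flow_sol x hf)) T0 e0.
exists d; split => // y hy t ht j.
apply: (hd (fun t => phi y (- t))) => //; first exact: (sol_rev (flow_sol y hf)).
by move=> i; rewrite Ropp_0 !(flow0 _ hf).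
Qed.

Lemma cd_fix n (f : vec n -> vec n) phi : LL f -> is_flow f phi ->
  forall x t e, 0 < e -> exists d, 0 < d /\ forall y,
    (forall j, Rabs (y j - x j) < d) -> forall j, Rabs (phi y t j - phi x t j) < e.
Proof.
move=> hL hf x t e e0.
case: (Rle_lt_dec 0 t) => ht.
  have [d [d0 hd]] := cd_fwd hL hf x ht e0.
  exists d; split => // y hy; apply: hd => //; lra.
have [d [d0 hd]] := cd_bwd hL hf x (T := - t) ltac:(lra) e0.
exists d; split => // y hy j; have := hd y hy (- t) ltac:(lra) j; by rewrite Ropp_involutive.
Qed.

Definition mix {n} (k : nat) (a b : vec n) : vec n :=
  fun i => if (nat_of_ord i < k)%N then b i else a i.

Lemma mvt_abs (g g' : R -> R) h M :
  (forall s, derivable_pt_lim g s (g' s)) ->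
  (forall s, (0 <= s <= h \/ h <= s <= 0) -> Rabs (g' s) <= M) ->
  Rabs (g h - g 0) <= M * Rabs h.
Proof.
move=> hd hM.
case: (Rle_lt_dec 0 h) => h0.
  rewrite (Rabs_right h); last lra.
  have := @mvt_bound g g' 0 h M h0 (fun s _ => hd s) (fun s hs => hM s ltac:(lra)).
  by rewrite Rminus_0_r.
rewrite (Rabs_left h) // Rabs_minus_sym.
have := @mvt_bound g g' h 0 M ltac:(lra) (fun s _ => hd s) (fun s hs => hM s ltac:(lra)).
have -> : 0 - h = - h by ring.
done.
Qed.

Lemma abs_le x a : -a <= x <= a -> Rabs x <= a.
Proof. move=> h; split_Rabs; lra. Qed.
Lemma abs_le_inv x a : Rabs x <= a -> -a <= x <= a.
Proof. move=> h; split_Rabs; lra. Qed.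

Lemma C1_lip n (g : vec n -> R) : Ck 1 g -> forall p, exists r L, 0 < r /\ 0 <= L /\
  forall a b c, 0 <= c -> box a p r -> box b p r -> (forall i, Rabs (a i - b i) <= c) ->
    Rabs (g b - g a) <= L * c.
Proof.
move=> [_ hd] p.
pose Q (i : 'I_n) (d : R) := exists dg : vec n -> R,
   (forall x, derivable_pt_lim (fun s => g (vadd x (vscal s (ebasis i)))) 0 (dg x)) /\
   forall w, box w p d -> Rabs (dg w) <= / d.
have [r [r0 hr]] : exists d, 0 < d /\ forall i, Q i d.
  apply: fin_all.
    move=> i d d' [dg [h1 h2]] hd'; exists dg; split => // w hw.
    have : / d <= / d' by apply: Rinv_le_contravar; lra.
    have : box w p d by move=> k; have := hw k; lra.
    move=> /h2; lra.
  move=> i; have [dg [h1 h2]] := hd i.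
  have [rho [rho0 hrho]] := h2 p 1 Rlt_0_1.
  have hK := Kn_pos n.
  pose d := Rmin (rho / (2 * Kn n)) (/ (Rabs (dg p) + 1)).
  have ha : 0 < / (Rabs (dg p) + 1) by apply: Rinv_0_lt_compat; have := Rabs_pos (dg p); lra.
  have hb : 0 < rho / (2 * Kn n) by apply: Rdiv_lt_0_compat; lra.
  have d0 : 0 < d by apply: Rmin_pos.
  exists d; split => //; exists dg; split => // w hw.
  have : vnorm (vsub w p) < rho.
    have := box_vnorm (x := w) (p := p) (Rlt_le _ _ d0) hw.
    have : Kn n * d <= Kn n * (rho / (2 * Kn n)) by apply: Rmult_le_compat_l; [lra| apply: Rmin_l].
    have : Kn n * (rho / (2 * Kn n)) = rho / 2 by field; lra.
    lra.
  move=> /hrho h.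
  have : / (/ (Rabs (dg p) + 1)) <= / d.
    apply: Rinv_le_contravar => //; apply: Rmin_r.
  rewrite Rinv_inv.
  have := Rabs_triang_inv (dg w) (dg p). lra.
exists r, (INR n * / r); split => //; split.
  apply: Rmult_le_pos; [exact: pos_INR | apply: Rlt_le; exact: Rinv_0_lt_compat].
move=> a b c c0 ha hb hab.
have key : forall k, (k <= n)%N -> Rabs (g (mix k a b) - g a) <= INR k * / r * c.
  elim => [|k IH] hk.
    have -> : mix 0 a b = a by apply: functional_extensionality => i.
    rewrite Rminus_diag Rabs_R0 /=; lra.
  have hk' : (k < n)%N by [].
  pose o := Ordinal hk'.
  have hmix : mix k.+1 a b = vadd (mix k a b) (vscal (b o - a o) (ebasis o)).
    apply: functional_extensionality => i; rewrite /mix /vadd /vscal /ebasis.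
    case: (ltngtP (nat_of_ord i) k) => hik.
    - have -> : (nat_of_ord i < k.+1)%N by apply: ltnW.
      have : i != o by apply/eqP => eio; move: hik; rewrite eio /= ltnn.
      move=> /negbTE ->; ring.
    - have -> : (nat_of_ord i < k.+1)%N = false by apply/negbTE; rewrite -leqNgt.
      have : i != o by apply/eqP => eio; move: hik; rewrite eio /= ltnn.
      move=> /negbTE ->; ring.
    - have eio : i = o by apply: val_inj.
      rewrite eio eqxx /= ltnSn; ring.
  have [dg [hdg hbd]] := hr o.
  pose phi1 s := g (vadd (mix k a b) (vscal s (ebasis o))).
  have hphi : forall s, derivable_pt_lim phi1 s (dg (vadd (mix k a b) (vscal s (ebasis o)))).
    move=> s; apply: dl_unshift.
    have := hdg (vadd (mix k a b) (vscal s (ebasis o))).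
    have -> : (fun h => g (vadd (vadd (mix k a b) (vscal s (ebasis o))) (vscal h (ebasis o))))
       = (fun h => phi1 (s + h)).
      apply: functional_extensionality => h; rewrite /phi1; f_equal.
      apply: functional_extensionality => i; rewrite /vadd /vscal; ring.
    done.
  have hm := @mvt_abs phi1 (fun s => dg (vadd (mix k a b) (vscal s (ebasis o)))) (b o - a o) (/ r) hphi.
  have hstep : Rabs (phi1 (b o - a o) - phi1 0) <= / r * c.
    apply: Rle_trans; first apply: hm.
      move=> s hs; apply: hbd => i; rewrite /vadd /vscal /ebasis /mix.
      case: eqP => [->|_].
        rewrite /= ltnn Rmult_1_r.
        have := abs_le_inv (ha o); have := abs_le_inv (hb o) => h1 h2.
        apply: abs_le; lra.
      rewrite Rmult_0_r Rplus_0_r; case: ifP => _; [exact: hb | exact: ha].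
    apply: Rmult_le_compat_l; [apply: Rlt_le; exact: Rinv_0_lt_compat|].
    rewrite Rabs_minus_sym; exact: hab.
  have e0 : phi1 0 = g (mix k a b).
    rewrite /phi1; f_equal; apply: functional_extensionality => i; rewrite /vadd /vscal; ring.
  have e1 : phi1 (b o - a o) = g (mix k.+1 a b) by rewrite /phi1 hmix.
  rewrite e0 e1 in hstep.
  have := IH (ltnW hk').
  have := Rabs_triang (g (mix k.+1 a b) - g (mix k a b)) (g (mix k a b) - g a).
  have -> : g (mix k.+1 a b) - g (mix k a b) + (g (mix k a b) - g a) = g (mix k.+1 a b) - g a by ring.
  rewrite S_INR; lra.
have -> : b = mix n a b.
  apply: functional_extensionality => i; by rewrite /mix ltn_ord.
have := key n (leqnn n); lra.
Qed.

Lemma smooth_LL n (f : vec n -> vec n) : smooth f -> LL f.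
Proof.
move=> hs p.
have [d [d0 hd]] : exists d, 0 < d /\ forall j, forall a b c, box a p d -> box b p d ->
    (forall i, Rabs (a i - b i) <= c) -> Rabs (f a j - f b j) <= / d * c.
  apply: fin_all.
    move=> j d d' h [hd'0 hd'] a b c ha hb hc.
    have c0 : 0 <= c by have := hc j; have := Rabs_pos (a j - b j); lra.
    have : / d <= / d' by apply: Rinv_le_contravar.
    have : Rabs (f a j - f b j) <= / d * c.
      apply: h => // k; [have := ha k | have := hb k]; lra.
    nra.
  move=> j; have [r [L [r0 [L0 hl]]]] := C1_lip (hs j 1%nat) p.
  have hL : 0 < / (L + 1) by apply: Rinv_0_lt_compat; lra.
  pose d := Rmin r (/ (L + 1)).
  have d0 : 0 < d by apply: Rmin_pos.
  exists d; split => // a b c ha hb hc.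
  have c0 : 0 <= c by have := hc j; have := Rabs_pos (a j - b j); lra.
  have : / (/ (L + 1)) <= / d by apply: Rinv_le_contravar => //; apply: Rmin_r.
  rewrite Rinv_inv => hi.
  have : Rabs ((fun x => f x j) a - (fun x => f x j) b) <= L * c.
    have hrd := Rmin_l r (/ (L + 1)); rewrite -/d in hrd.
    rewrite Rabs_minus_sym; apply: hl => //.
    - move=> k; have := ha k; lra.
    - move=> k; have := hb k; lra.
  simpl; nra.
exists d, (/ d); split => //; split; first by apply: Rlt_le; apply: Rinv_0_lt_compat.
move=> a b c ha hb hc j; exact: hd.
Qed.

Definition gsq (u : R) : R := Rmin u 0 * Rmin u 0.

Lemma gsq_ineq u h : Rabs (gsq (u + h) - gsq u - 2 * Rmin u 0 * h) <= 2 * (h * h).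
Proof.
rewrite /gsq /Rmin.
case: (Rle_dec (u + h) 0); case: (Rle_dec u 0) => h1 h2; apply: abs_le; split; nra.
Qed.

Definition rho (T t : R) : R := gsq (t - T) / (T * T).

Lemma dl_rho T t : 0 < T -> derivable_pt_lim (rho T) t (2 * Rmin (t - T) 0 / (T * T)).
Proof.
move=> T0 e e0.
have TT : 0 < T * T by nra.
have de : 0 < e * (T * T) / 2 by apply: Rdiv_lt_0_compat; nra.
exists (mkposreal _ de) => h h0 /= hh.
rewrite /rho.
have -> : t + h - T = (t - T) + h by ring.
have -> : (gsq (t - T + h) / (T * T) - gsq (t - T) / (T * T)) / h - 2 * Rmin (t - T) 0 / (T * T)
   = (gsq (t - T + h) - gsq (t - T) - 2 * Rmin (t - T) 0 * h) / (h * (T * T)) by field; lra.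
have hi := gsq_ineq (t - T) h.
move: (gsq (t - T + h) - gsq (t - T) - 2 * Rmin (t - T) 0 * h) hi => X hX.
have ha : 0 < Rabs h by apply: Rabs_pos_lt.
rewrite /Rdiv Rabs_mult Rabs_inv Rabs_mult (Rabs_right (T * T)); last lra.
have hhh : h * h = Rabs h * Rabs h by rewrite -Rabs_mult Rabs_right; nra.
have hinv : / (Rabs h * (T * T)) * (Rabs h * (T * T)) = 1 by field; lra.
have hpos : 0 < / (Rabs h * (T * T)) by apply: Rinv_0_lt_compat; nra.
have : Rabs X * / (Rabs h * (T * T)) <= 2 * Rabs h * Rabs h * / (Rabs h * (T * T)) by nra.
have : 2 * Rabs h * Rabs h * / (Rabs h * (T * T)) = 2 * Rabs h / (T * T) by field; lra.
have : 2 * Rabs h / (T * T) < e.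
  apply: (Rmult_lt_reg_r (T * T)) => //.
  have -> : 2 * Rabs h / (T * T) * (T * T) = 2 * Rabs h by field; lra.
  lra.
lra.
Qed.

Lemma bridge n (f : vec n -> vec n) (q : R -> vec n) (d : vec n) T eta D mu :
  sol f q -> 0 < T -> 0 <= D -> 0 <= eta ->
  (forall t l, 0 <= t <= T -> 0 <= l <= 1 -> forall j,
       Rabs (f (fun i => q t i + l * d i) j - f (q t) j) <= eta) ->
  (forall j, Rabs (d j) <= D) ->
  Kn n * (eta + 2 * D / T) <= mu ->
  eps_solution f mu (fun t i => q t i + rho T t * d i).
Proof.
move=> sq T0 D0 eta0 hv hd hmu t t0.
have TT : 0 < T * T by nra.
exists (fun j => f (q t) j + 2 * Rmin (t - T) 0 / (T * T) * d j); split.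
  move=> j; apply: dlim_nonneg.
  apply: (derivable_pt_lim_plus (fun s => q s j) (fun s => rho T s * d j)); first exact: sq.
  have -> : (fun s => rho T s * d j) = mult_real_fct (d j) (rho T).
    apply: functional_extensionality => s; rewrite /mult_real_fct; ring.
  rewrite (Rmult_comm _ (d j)); apply: derivable_pt_lim_scal; exact: dl_rho.
have hK := Kn_pos n.
have hc0 : 0 <= eta + 2 * D / T.
  have : 0 <= 2 * D / T by apply: Rle_mult_inv_pos; lra.
  lra.
apply: Rle_trans; last exact hmu.
have -> : vsub (f (fun i => q t i + rho T t * d i)) (fun j => f (q t) j + 2 * Rmin (t - T) 0 / (T * T) * d j)
  = fun j => (f (fun i => q t i + rho T t * d i) j - f (q t) j) - 2 * Rmin (t - T) 0 / (T * T) * d j.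
  apply: functional_extensionality => j; rewrite /vsub; ring.
apply: vnorm_le => // j.
case: (Rle_lt_dec t T) => tT.
  have hm : - T <= Rmin (t - T) 0 <= 0.
    split; [apply: Rmin_glb; lra | apply: Rmin_r].
  have hr : 0 <= rho T t <= 1.
    rewrite /rho /gsq; split.
      apply: Rle_mult_inv_pos; nra.
    apply: (Rmult_le_reg_r (T * T)) => //.
    have -> : Rmin (t - T) 0 * Rmin (t - T) 0 / (T * T) * (T * T) = Rmin (t - T) 0 * Rmin (t - T) 0 by field; lra.
    nra.
  have h1 := hv t (rho T t) ltac:(lra) hr j.
  have h2 : Rabs (2 * Rmin (t - T) 0 / (T * T) * d j) <= 2 * D / T.
    rewrite Rabs_mult.
    have : Rabs (2 * Rmin (t - T) 0 / (T * T)) <= 2 / T.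
      rewrite /Rdiv Rabs_mult Rabs_inv Rabs_mult (Rabs_right (T * T)); last lra.
      rewrite (Rabs_right 2); last lra.
      have hh : Rabs (Rmin (t - T) 0) <= T by apply: abs_le; lra.
      have -> : 2 * / T = 2 * T * / (T * T) by field; lra.
      apply: Rmult_le_compat_r; [apply: Rlt_le; exact: Rinv_0_lt_compat | lra].
    have := hd j; have := Rabs_pos (d j).
    have := Rabs_pos (2 * Rmin (t - T) 0 / (T * T)).
    have : 2 * D / T = 2 / T * D by field; lra.
    nra.
  have := Rabs_triang (f (fun i => q t i + rho T t * d i) j - f (q t) j) (- (2 * Rmin (t - T) 0 / (T * T) * d j)).
  rewrite Rabs_Ropp.
  have -> : f (fun i => q t i + rho T t * d i) j - f (q t) j + - (2 * Rmin (t - T) 0 / (T * T) * d j)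
    = f (fun i => q t i + rho T t * d i) j - f (q t) j - 2 * Rmin (t - T) 0 / (T * T) * d j by ring.
  lra.
have hm : Rmin (t - T) 0 = 0 by rewrite /Rmin; case: (Rle_dec (t - T) 0) => //; lra.
have hr : rho T t = 0 by rewrite /rho /gsq hm; field; lra.
rewrite hr hm.
have -> : (fun i => q t i + 0 * d i) = q t.
  apply: functional_extensionality => i; ring.
have -> : f (q t) j - f (q t) j - 2 * 0 / (T * T) * d j = 0 by field; lra.
rewrite Rabs_R0; lra.
Qed.

Definition setting {n} (f : vec n -> vec n) (phi : vec n -> R -> vec n) (V : set_ n) (mu : R) :=
  LL f /\ is_flow f phi /\ 0 < mu /\ ssubset (eps_reach f mu V) V.

Definition intV {n} (V : set_ n) (x : vec n) : Prop :=
  exists r, 0 < r /\ forall w, (forall i, Rabs (w i - x i) < r) -> V w.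

Lemma tri (a b c : R) : Rabs (a - c) <= Rabs (a - b) + Rabs (b - c).
Proof.
have := Rabs_triang (a - b) (b - c).
have -> : a - b + (b - c) = a - c by ring. done.
Qed.

Lemma sub_clos n (S : set_ n) x : S x -> sclosure S x.
Proof. move=> h r r0; exists x; split => //; rewrite vnorm_self; lra. Qed.

Lemma clos_clos n (S : set_ n) x : sclosure (sclosure S) x -> sclosure S x.
Proof.
move=> h r r0.
have hK := Kn_pos n.
have r3 : 0 < r / (3 * Kn n) by apply: Rdiv_lt_0_compat; lra.
have [y [hy1 hy2]] := h _ r3.
have [z [hz1 hz2]] := hy1 _ r3.
exists z; split => //.
have := @box_vnorm n z x (2 * (r / (3 * Kn n))) ltac:(lra).
have : Kn n * (2 * (r / (3 * Kn n))) = 2 * r / 3 by field; lra.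
move=> -> H; apply: Rle_lt_trans; first apply: H; last lra.
move=> i; have := vnorm_box hy2 i; have := vnorm_box hz2 i; have := tri (z i) (y i) (x i); lra.
Qed.

Lemma notC_open n (V : set_ n) x : ~ sclosure V x ->
  exists rho, 0 < rho /\ forall w, (forall i, Rabs (w i - x i) < rho) -> ~ sclosure V w.
Proof.
move=> h.
have [r [r0 hr]] : exists r, 0 < r /\ forall y, V y -> r <= vnorm (vsub y x).
  apply: NNPP => hn; apply: h => r r0.
  apply: NNPP => hn2; apply: hn; exists r; split => // y hy.
  apply: Rnot_lt_le => hlt; apply: hn2; by exists y.
have hK := Kn_pos n.
have r3 : 0 < r / (3 * Kn n) by apply: Rdiv_lt_0_compat; lra.
exists (r / (3 * Kn n)); split => // w hw hc.
have [y [hy1 hy2]] := hc _ r3.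
have := hr y hy1.
have := @box_vnorm n y x (2 * (r / (3 * Kn n))) ltac:(lra).
have : Kn n * (2 * (r / (3 * Kn n))) = 2 * r / 3 by field; lra.
move=> -> H; have : vnorm (vsub y x) <= 2 * r / 3; last lra.
apply: H => i; have := vnorm_box hy2 i; have := hw i; have := tri (y i) (w i) (x i); lra.
Qed.

Lemma intV_not_bd n (V : set_ n) x : intV V x -> ~ sclosure (setC_ (sclosure V)) x.
Proof.
move=> [r [r0 hr]] hc.
have [w [hw1 hw2]] := hc r r0.
apply: hw1; apply: sub_clos; apply: hr; exact: vnorm_box hw2.
Qed.

Lemma intV_V n (V : set_ n) x : intV V x -> V x.
Proof. move=> [r [r0 hr]]; apply: hr => i; rewrite Rminus_diag Rabs_R0; lra. Qed.

Lemma flow_epssol n (f : vec n -> vec n) phi x mu : is_flow f phi -> 0 <= mu -> eps_solution f mu (phi x).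
Proof.
move=> hf m0 t t0; exists (f (phi x t)); split.
  move=> j; apply: dlim_nonneg; exact: (proj2 (hf x) t j).
rewrite vnorm_self; lra.
Qed.

Lemma flow_inv n f phi (V : set_ n) mu : setting f phi V mu ->
  forall x t, V x -> 0 <= t -> V (phi x t).
Proof.
move=> [hL [hf [m0 hV]]] x t hx t0; apply: hV.
exists (phi x), t; split; first by apply: flow_epssol => //; lra.
by rewrite (flow0 _ hf).
Qed.

Lemma intV_prop n f phi (V : set_ n) mu : setting f phi V mu ->
  forall x t, intV V x -> 0 <= t -> intV V (phi x t).
Proof.
move=> hs x t [r [r0 hr]] t0.
have [hL [hf _]] := hs.
have [d [d0 hd]] := cd_fix hL hf (phi x t) (- t) r0.
exists d; split => // w hw.
have := hd w hw.
rewrite (flow_group hL hf) Rplus_opp_r (flow0 _ hf) => h.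
have := @flow_inv n f phi V mu hs (phi w (- t)) t (hr _ h) t0.
by rewrite (flow_group hL hf) Rplus_opp_l (flow0 _ hf).
Qed.

Lemma I1 n f phi (V : set_ n) mu : setting f phi V mu ->
  forall z t, sclosure V z -> 0 < t -> intV V (phi z t).
Proof.
move=> hs z t hz tpos.
have [hL [hf [m0 hV]]] := hs.
have hK := Kn_pos n.
pose eta := mu / (4 * Kn n).
have eta0 : 0 < eta by apply: Rdiv_lt_0_compat; lra.
have [r0 [L [r00 [L0 hlip]]]] := hL z.
pose r1 := Rmin r0 (eta / (L + 1)).
have hr1a : 0 < eta / (L + 1) by apply: Rdiv_lt_0_compat; lra.
have r10 : 0 < r1 by apply: Rmin_pos.
have r1b : r1 <= r0 by apply: Rmin_l.
have r1L : L * r1 <= eta.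
  have : r1 <= eta / (L + 1) by apply: Rmin_r.
  have : eta / (L + 1) * (L + 1) = eta by field; lra.
  nra.
have [dc [dc0 hdc]] := @sol_cont n f (phi z) (flow_sol z hf) 0 (r1 / 4) ltac:(lra).
rewrite (flow0 _ hf) in hdc.
pose t0 := Rmin t (dc / 2).
have t00 : 0 < t0 by apply: Rmin_pos; lra.
have t0t : t0 <= t by apply: Rmin_l.
have t0d : t0 <= dc / 2 by apply: Rmin_r.
have hz0 : forall tau, 0 <= tau <= t0 -> forall j, Rabs (phi z tau j - z j) < r1 / 4.
  move=> tau ht j; apply: hdc; rewrite Rminus_0_r Rabs_right; lra.
pose e2 := Rmin (r1 / 4) (mu * t0 / (16 * Kn n)).
have he2b : 0 < mu * t0 / (16 * Kn n) by apply: Rdiv_lt_0_compat; nra.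
have e20 : 0 < e2 by apply: Rmin_pos; lra.
have e2a : e2 <= r1 / 4 by apply: Rmin_l.
have e2b : e2 <= mu * t0 / (16 * Kn n) by apply: Rmin_r.
have [d2 [d20 hd2]] := cd_bwd hL hf (phi z t0) (Rlt_le _ _ t00) e20.
suff hI : intV V (phi z t0).
  have := intV_prop hs (t := t - t0) hI ltac:(lra).
  rewrite (flow_group hL hf).
  by have -> : t0 + (t - t0) = t by ring.
exists d2; split => // w hw.
have hcmp : forall tau, 0 <= tau <= t0 -> forall j, Rabs (phi w (tau + - t0) j - phi z tau j) < e2.
  move=> tau htau j; have := hd2 w hw (t0 - tau) ltac:(lra) j.
  rewrite (flow_group hL hf).
  have -> : t0 + - (t0 - tau) = tau by ring.
  by have -> : - (t0 - tau) = tau + - t0 by ring.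
have [v [hv1 hv2]] := hz e2 e20.
pose q := fun tau => phi w (tau + - t0).
have sq : sol f q := sol_shift (- t0) (flow_sol w hf).
pose d := vsub v (q 0).
pose D := Rmin (r1 / 2) (mu * t0 / (8 * Kn n)).
have hD8 : 0 < mu * t0 / (8 * Kn n) by apply: Rdiv_lt_0_compat; nra.
have D0 : 0 <= D by apply: Rlt_le; apply: Rmin_pos; lra.
have hd : forall j, Rabs (d j) <= D.
  move=> j; rewrite /d /vsub /q.
  have h1 := vnorm_box hv2 j.
  have h2 := hcmp 0 ltac:(lra) j.
  rewrite (flow0 _ hf) in h2.
  have := tri (v j) (z j) (phi w (0 + - t0) j).
  rewrite (Rabs_minus_sym (z j)).
  have : 2 * e2 <= D.
    apply: Rmin_glb; first lra.
    have : mu * t0 / (8 * Kn n) = 2 * (mu * t0 / (16 * Kn n)) by field; lra.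
    lra.
  lra.
have hvar : forall tau l, 0 <= tau <= t0 -> 0 <= l <= 1 -> forall j,
    Rabs (f (fun i => q tau i + l * d i) j - f (q tau) j) <= eta.
  move=> tau l htau hl j.
  have hDr : D <= r1 / 2 by apply: Rmin_l.
  have hq : forall i, Rabs (q tau i - z i) <= r1 / 2.
    move=> i; have := hcmp tau htau i; have := hz0 tau htau i.
    have := tri (q tau i) (phi z tau i) (z i); rewrite /q; lra.
  have hld : forall i, Rabs (l * d i) <= r1 / 2.
    move=> i; rewrite Rabs_mult (Rabs_right l); last lra.
    have := hd i; have := Rabs_pos (d i); nra.
  apply: Rle_trans; first apply: (hlip _ _ r1).
  - move=> i; have := hq i; have := hld i.
    have := Rabs_triang (l * d i) (q tau i - z i).
    have -> : l * d i + (q tau i - z i) = q tau i + l * d i - z i by ring.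
    lra.
  - move=> i; have := hq i; lra.
  - move=> i; have -> : q tau i + l * d i - q tau i = l * d i by ring.
    have := hld i; lra.
  - done.
have heps : Kn n * (eta + 2 * D / t0) <= mu.
  have : D <= mu * t0 / (8 * Kn n) by apply: Rmin_r.
  move=> hD.
  have : 2 * D / t0 <= mu / (4 * Kn n).
    apply: (Rmult_le_reg_r t0) => //.
    have -> : 2 * D / t0 * t0 = 2 * D by field; lra.
    have : mu * t0 / (8 * Kn n) = mu / (4 * Kn n) * t0 / 2 by field; lra.
    lra.
  rewrite /eta => h2.
  have : Kn n * (mu / (4 * Kn n) + mu / (4 * Kn n)) = mu / 2 by field; lra.
  have : 0 <= Kn n * (mu / (4 * Kn n) + 2 * D / t0 - (mu / (4 * Kn n) + 2 * D / t0)) by rewrite Rminus_diag; lra.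
  nra.
have hb := bridge sq t00 D0 (Rlt_le _ _ eta0) hvar hd heps.
apply: hV.
exists (fun tau i => q tau i + rho t0 tau * d i), t0; split => //; split.
  have -> : (fun i => q 0 i + rho t0 0 * d i) = v; last done.
  have -> : rho t0 0 = 1 by rewrite /rho /gsq /Rmin; case: Rle_dec => h; [field; lra| lra].
  apply: functional_extensionality => i; rewrite /d /vsub; ring.
split; first lra.
have -> : rho t0 t0 = 0 by rewrite /rho /gsq Rminus_diag /Rmin; case: Rle_dec => h; [field; lra| lra].
have -> : (fun i => q t0 i + 0 * d i) = q t0 by apply: functional_extensionality => i; ring.
by rewrite /q Rplus_opp_r (flow0 _ hf).
Qed.

Lemma I3 n f phi (V : set_ n) mu : setting f phi V mu ->
  forall x t, sclosure V x -> 0 <= t -> sclosure V (phi x t).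
Proof.
move=> hs x t hx t0; have [hL [hf _]] := hs.
case: (Req_dec t 0) => [->|ne]; first by rewrite (flow0 _ hf).
apply: sub_clos; apply: intV_V; apply: (I1 hs) => //; lra.
Qed.

Lemma bd_C n (V : set_ n) x : sboundary (sclosure V) x -> sclosure V x.
Proof. move=> [h _]; exact: clos_clos. Qed.

Lemma I2 n f phi (V : set_ n) mu : setting f phi V mu ->
  forall z t, sboundary (sclosure V) z -> t < 0 -> ~ sclosure V (phi z t).
Proof.
move=> hs z t hz t0 hc; have [hL [hf _]] := hs.
have := I1 hs hc (t := - t) ltac:(lra).
rewrite (flow_group hL hf) Rplus_opp_r (flow0 _ hf) => hi.
exact: (intV_not_bd hi (proj2 hz)).
Qed.

Lemma cross_uniq n f phi (V : set_ n) mu : setting f phi V mu ->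
  forall x t1 t2, sboundary (sclosure V) (phi x t1) -> sboundary (sclosure V) (phi x t2) -> t1 <= t2 -> t1 = t2.
Proof.
move=> hs x t1 t2 h1 h2 h12; have [hL [hf _]] := hs.
apply: NNPP => ne.
have := I1 hs (bd_C h1) (t := t2 - t1) ltac:(lra).
rewrite (flow_group hL hf); have -> : t1 + (t2 - t1) = t2 by ring.
move=> hi; exact: (intV_not_bd hi (proj2 h2)).
Qed.

Lemma intV_shrink n (V : set_ n) x : intV V x -> exists r, 0 < r /\
  forall w, (forall i, Rabs (w i - x i) < r) -> intV V w.
Proof.
move=> [r [r0 hr]]; exists (r / 2); split; first lra.
move=> w hw; exists (r / 2); split; first lra.
move=> y hy; apply: hr => i; have := hw i; have := hy i; have := tri (y i) (w i) (x i); lra.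
Qed.

Theorem lemma3 (n : nat) (f : vec n -> vec n) (phi : vec n -> R -> vec n)
  (I U V : set_ n) (mu : R) :
  smooth f ->
  is_flow f phi ->
  robustly_safe f I U mu ->
  sdisjoint (sclosure I) (sclosure U) ->
  sbounded (setC_ U) ->
  robust_certificate f I U mu V ->
  exists W : set_ n,
    is_open W /\
    ssubset (sboundary (sclosure V)) W /\
    ssubset W (flow_reach phi (sboundary (sclosure V))) /\
    forall nu : vec n -> R,
      (forall x, flow_reach phi (sboundary (sclosure V)) x ->
                 sboundary (sclosure V) (phi x (- nu x))) ->
      cont_on W nu.
Proof.
move=> hsm hf [m0 _] _ _ [_ [hinv _]].
have hL := smooth_LL hsm.
have hs : setting f phi V mu by split => //; split => //; split.
have hK := Kn_pos n.
pose W y := exists s1 s2, s1 < s2 /\ ~ sclosure V (phi y s1) /\ intV V (phi y s2).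
have WFR : forall y, W y -> flow_reach phi (sboundary (sclosure V)) y.
  move=> y [s1 [s2 [h12 [hn1 hi2]]]].
  apply: NNPP => hnot.
  have all : forall t, s1 <= t <= s2 -> ~ sclosure V (phi y t).
    apply: (@cont_ind s1 s2 (fun t => ~ sclosure V (phi y t))) => //; first lra.
    move=> s hs1 Hlt.
    have hns : ~ sclosure V (phi y s).
      move=> hc.
      case: (Req_dec s s1) => [es|ne]; first by apply: hn1; rewrite -es.
      apply: hnot; exists (phi y s), (- s); split.
        split; first exact: sub_clos.
        move=> r r0.
        have [dd [dd0 hdd]] := @sol_cont n f (phi y) (flow_sol y hf) s (r / (2 * Kn n))
          ltac:(apply: Rdiv_lt_0_compat; lra).
        pose t := Rmax s1 (s - dd / 2).
        have ta : s1 <= t by apply: Rmax_l.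
        have tb : s - dd / 2 <= t by apply: Rmax_r.
        have tc : t < s by rewrite /t /Rmax; case: Rle_dec => _; lra.
        exists (phi y t); split; first by apply: Hlt; lra.
        have := @box_vnorm n (phi y t) (phi y s) (r / (2 * Kn n)) ltac:(apply: Rlt_le; apply: Rdiv_lt_0_compat; lra).
        have -> : Kn n * (r / (2 * Kn n)) = r / 2 by field; lra.
        move=> H; apply: Rle_lt_trans; first apply: H; last lra.
        move=> i; apply: Rlt_le; apply: hdd; rewrite Rabs_left; lra.
      by rewrite (flow_group hL hf) Rplus_opp_r (flow0 _ hf).
    have [rho [rho0 hrho]] := notC_open hns.
    have [dd [dd0 hdd]] := @sol_cont n f (phi y) (flow_sol y hf) s rho rho0.
    exists dd; split => // t ht; apply: hrho; apply: hdd; rewrite Rabs_right; lra.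
  apply: (all s2 ltac:(lra)); apply: sub_clos; exact: intV_V hi2.
exists W; split.
  move=> y [s1 [s2 [h12 [hn1 hi2]]]].
  have [r1 [r10 hr1]] := notC_open hn1.
  have [r2 [r20 hr2]] := intV_shrink hi2.
  have [d1 [d10 hd1]] := cd_fix hL hf y s1 r10.
  have [d2 [d20 hd2]] := cd_fix hL hf y s2 r20.
  exists (Rmin d1 d2); split; first by apply: Rmin_pos.
  move=> y' hy'; exists s1, s2; split => //; split.
    apply: hr1; apply: hd1 => i; have := vnorm_box hy' i; have := Rmin_l d1 d2; lra.
  apply: hr2; apply: hd2 => i; have := vnorm_box hy' i; have := Rmin_r d1 d2; lra.
split.
  move=> b hb; exists (-1), 1; split; first lra; split.
    apply: (I2 hs hb); lra.
  apply: (I1 hs (bd_C hb)); lra.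
split; first exact: WFR.
move=> nu hnu x hx e e0.
have hbx := hnu x (WFR x hx).
have hCx := bd_C hbx.
have ha : intV V (phi x (- nu x + e / 2)).
  have := I1 hs hCx (t := e / 2) ltac:(lra); by rewrite (flow_group hL hf).
have hb : ~ sclosure V (phi x (- nu x + - (e / 2))).
  have := I2 hs hbx (t := - (e / 2)) ltac:(lra); by rewrite (flow_group hL hf).
have [ra [ra0 hra]] := ha.
have [rb [rb0 hrb]] := notC_open hb.
have [da [da0 hda]] := cd_fix hL hf x (- nu x + e / 2) ra0.
have [db [db0 hdb]] := cd_fix hL hf x (- nu x + - (e / 2)) rb0.
exists (Rmin da db); split; first by apply: Rmin_pos.
move=> y hy hvn.
have hby := hnu y (WFR y hy).
have hya : V (phi y (- nu x + e / 2)).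
  apply: hra; apply: hda => i; have := vnorm_box hvn i; have := Rmin_l da db; lra.
have hyb : ~ sclosure V (phi y (- nu x + - (e / 2))).
  apply: hrb; apply: hdb => i; have := vnorm_box hvn i; have := Rmin_r da db; lra.
have u1 : - nu y <= - nu x + e / 2.
  apply: Rnot_lt_le => hlt.
  have := I1 hs (sub_clos hya) (t := - nu y - (- nu x + e / 2)) ltac:(lra).
  rewrite (flow_group hL hf).
  have -> : - nu x + e / 2 + (- nu y - (- nu x + e / 2)) = - nu y by ring.
  move=> hi; exact: (intV_not_bd hi (proj2 hby)).
have u2 : - nu x + - (e / 2) <= - nu y.
  apply: Rnot_lt_le => hlt.
  apply: hyb.
  have := I3 hs (bd_C hby) (t := - nu x + - (e / 2) - - nu y) ltac:(lra).
  rewrite (flow_group hL hf).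
  by have -> : - nu y + (- nu x + - (e / 2) - - nu y) = - nu x + - (e / 2) by ring.
apply: Rabs_def1; lra.
Qed.
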